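(* Let $\Sigma\subseteq\mathcal L_\Diamond$ be finite and closed under subformulas and let $\mathcal I$ be a finite weak $\Sigma$-quasimodel such that for every deterministic weak $\mathcal L_\Diamond$-quasimodel $\mathcal A$ the relation $\rightharpoonup\ \subseteq|\mathcal I|\times|\mathcal A|$ is a surjective dynamic simulation. Let $P=\{w\in|\mathcal I|:\ \not\vdash\mathrm{Sim}(w)\}$ be the set of possible moments. Then $P$ is upward closed in $(|\mathcal I|,\preccurlyeq_{\mathcal I})$, and $S_{\mathcal I}\cap(P\times P)$ is serial on $P$: for every $w\in P$ there is $v\in P$ with $w\,S_{\mathcal I}\,v$.
   Context: $\mathcal L_\Diamond$ is the propositional language with $\bot,\wedge,\vee,\to$ and unary modalities $\bigcirc$, $\Diamond$. ${\sf ITL}^0_\Diamond$ is axiomatized by all intuitionistic propositional tautologies, $\neg\bigcirc\bot$, $\bigcirc\varphi\wedge\bigcirc\psi\to\bigcirc(\varphi\wedge\psi)$, $\bigcirc(\varphi\vee\psi)\to\bigcirc\varphi\vee\bigcirc\psi$, $\bigcirc(\varphi\to\psi)\to(\bigcirc\varphi\to\bigcirc\psi)$, $\varphi\vee\bigcirc\Diamond\varphi\to\Diamond\varphi$, closed under modus ponens and the rules $\varphi/\bigcirc\varphi$, $(\varphi\to\psi)/(\Diamond\varphi\to\Diamond\psi)$, $(\bigcirc\varphi\to\varphi)/(\Diamond\varphi\to\varphi)$; $\vdash\varphi$ means $\varphi\in{\sf ITL}^0_\Diamond$. Types: a $\Sigma$-type is a pair $\Phi=(\Phi^-;\Phi^+)$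 of subsets of $\Sigma$ with $\Phi^-\cap\Phi^+=\varnothing$, $\Phi^-\cup\Phi^+=\Sigma$, $\bot\notin\Phi^+$, $\wedge,\vee$ in $\Phi^+$ behaving classically, ($\varphi\to\psi\in\Phi^+\Rightarrow\varphi\in\Phi^-$ or $\psi\in\Phi^+$), ($\Diamond\varphi\in\Phi^-\Rightarrow\varphi\in\Phi^-$). $\Phi\preccurlyeq_T\Psi$ iff $\Phi^+\subseteq\Psi^+$; $\Phi\subseteq_T\Psi$ iff $\Phi^-\subseteq\Psi^-$, $\Phi^+\subseteq\Psi^+$. $\Phi\,S_T\,\Psi$ iff: $\bigcirc\varphi\in\Phi^+\Rightarrow\varphi\in\Psi^+$; $\bigcirc\varphi\in\Phi^-\Rightarrow\varphi\in\Psi^-$; ($\Diamond\varphi\in\Phi^+$, $\varphi\in\Phi^-$)$\Rightarrow\Diamond\varphi\in\Psi^+$; $\Diamond\varphi\in\Phi^-\Rightarrow\Diamond\varphi\in\Psi^-$. A $\Sigma$-labelled frame is $(W,\preccurlyeq,\ell)$, $\preccurlyeq$ a partial order, $\ell$ mapping to $\Sigma$-types, monotone w.r.t. $\preccurlyeq_T$, and if $\varphi\to\psi\in\ell^-(w)$ then some $v\succcurlyeq w$ has $\varphi\in\ell^+(v)$, $\psi\in\ell^-(v)$. A weak $\Sigma$-quasimodel adds $S\subseteq W\times W$ forward-confluent (if $w\preccurlyeq w'$, $w\,S\,v$ then some $v'\succcurlyeq v$ has $w'\,S\,v'$) and sensible ($w\,S\,v\Rightarrow\ell(w)\,S_T\,\ell(v)$);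 deterministic if $S$ is a function. A simulation from a $\Sigma$-labelled $\mathcal X$ to a $\Delta$-labelled $\mathcal Y$ ($\Sigma\subseteq\Delta$) is a forward-confluent $E\subseteq|\mathcal X|\times|\mathcal Y|$ (if $x\,E\,y$, $x\preccurlyeq x'$ then some $y'\succcurlyeq y$ has $x'\,E\,y'$) with $x\,E\,y\Rightarrow\ell(x)\subseteq_T\ell(y)$; $x\rightharpoonup y$ iff some simulation relates them; $E$ is dynamic if $x\,E\,y$ and $y\,S\,y'$ imply some $x'$ with $x\,S\,x'$, $x'\,E\,y'$; surjective if every point of $\mathcal A$ is in its range. $\mathrm{Sim}(w)$ for $w$ in a finite $\Sigma$-labelled frame is defined by backwards induction on $\prec$: $\mathrm{Sim}(w)=\bigwedge\ell^+(w)\to\big(\bigvee\ell^-(w)\vee\bigvee_{v\succ w}\mathrm{Sim}(v)\big)$ ($\bigwedge\varnothing=\top$, $\bigvee\varnothing=\bot$). *)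

(* Defs.v *)
From HB Require Import structures.
From mathcomp Require Import all_boot.
Set Implicit Arguments. Unset Strict Implicit. Unset Printing Implicit Defensive.

Inductive form : Type :=
| Var  : nat -> form
| Bot  : form
| And  : form -> form -> form
| Or   : form -> form -> form
| Imp  : form -> form -> form
| Next : form -> form
| Dia  : form -> form.

Definition form_eq_dec : forall x y : form, {x = y} + {x <> y}.
Proof. decide equality; exact: (eq_comparable _ _). Defined.

HB.instance Definition _ := hasDecEq.Build form (compareP form_eq_dec).

Definition Top : form := Imp Bot Bot.
Definition Neg (p : form) : form := Imp p Bot.

(* The intuitionistic tautologies are given by the standard schematic Hilbert
   axioms of IPC (all their instances over L_Diamond); together with modus ponens
   they generate exactly all substitution instances of intuitionistic tautologies. *)
Inductive prov : form -> Prop :=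
| ax_K p q : prov (Imp p (Imp q p))
| ax_S p q r : prov (Imp (Imp p (Imp q r)) (Imp (Imp p q) (Imp p r)))
| ax_andE1 p q : prov (Imp (And p q) p)
| ax_andE2 p q : prov (Imp (And p q) q)
| ax_andI p q : prov (Imp p (Imp q (And p q)))
| ax_orI1 p q : prov (Imp p (Or p q))
| ax_orI2 p q : prov (Imp q (Or p q))
| ax_orE p q r : prov (Imp (Imp p r) (Imp (Imp q r) (Imp (Or p q) r)))
| ax_efq p : prov (Imp Bot p)
| ax_next_bot : prov (Neg (Next Bot))
| ax_next_and p q : prov (Imp (And (Next p) (Next q)) (Next (And p q)))
| ax_next_or p q : prov (Imp (Next (Or p q)) (Or (Next p) (Next q)))
| ax_next_K p q : prov (Imp (Next (Imp p q)) (Imp (Next p) (Next q)))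
| ax_dia_fix p : prov (Imp (Or p (Next (Dia p))) (Dia p))
| r_mp p q : prov (Imp p q) -> prov p -> prov q
| r_nec p : prov p -> prov (Next p)
| r_dia_mono p q : prov (Imp p q) -> prov (Imp (Dia p) (Dia q))
| r_dia_ind p : prov (Imp (Next p) p) -> prov (Imp (Dia p) p).

Definition subf_closed (Sg : seq form) : Prop :=
  forall p, p \in Sg ->
    match p with
    | And a b | Or a b | Imp a b => a \in Sg /\ b \in Sg
    | Next a | Dia a => a \in Sg
    | _ => True
    end.

Record ty := Ty { tminus : pred form; tplus : pred form }.

Definition is_type (Sg : pred form) (t : ty) : Prop :=
  (forall p, ~~ (tminus t p && tplus t p)) /\
  (forall p, Sg p = (tminus t p || tplus t p)) /\
  ~~ tplus t Bot /\
  (forall p q, Sg (And p q) -> tplus t (And p q) = tplus t p && tplus t q) /\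
  (forall p q, Sg (Or p q) -> tplus t (Or p q) = tplus t p || tplus t q) /\
  (forall p q, tplus t (Imp p q) -> tminus t p || tplus t q) /\
  (forall p, tminus t (Dia p) -> tminus t p).

Definition subT (t u : ty) : Prop :=
  (forall p, tminus t p -> tminus u p) /\ (forall p, tplus t p -> tplus u p).

Definition ST (t u : ty) : Prop :=
  (forall p, tplus t (Next p) -> tplus u p) /\
  (forall p, tminus t (Next p) -> tminus u p) /\
  (forall p, tplus t (Dia p) -> tminus t p -> tplus u (Dia p)) /\
  (forall p, tminus t (Dia p) -> tminus u (Dia p)).

Definition is_labelled_frame (Sg : pred form) (W : Type)
    (le : W -> W -> Prop) (l : W -> ty) : Prop :=
  (forall w, le w w) /\
  (forall u v w, le u v -> le v w -> le u w) /\
  (forall u v, le u v -> le v u -> u = v) /\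
  (forall w, is_type Sg (l w)) /\
  (forall w v p, le w v -> tplus (l w) p -> tplus (l v) p) /\
  (forall w p q, tminus (l w) (Imp p q) ->
     exists v, le w v /\ tplus (l v) p /\ tminus (l v) q).

Definition forward_confluent (W : Type) (le S : W -> W -> Prop) : Prop :=
  forall w w' v, le w w' -> S w v -> exists v', le v v' /\ S w' v'.

Definition sensible (W : Type) (S : W -> W -> Prop) (l : W -> ty) : Prop :=
  forall w v, S w v -> ST (l w) (l v).

Definition is_weak_qm (Sg : pred form) (W : Type)
    (le S : W -> W -> Prop) (l : W -> ty) : Prop :=
  is_labelled_frame Sg le l /\ forward_confluent le S /\ sensible S l.

Definition deterministic (W : Type) (S : W -> W -> Prop) : Prop :=
  forall w, exists! v, S w v.

Definition is_simulation (X Y : Type) (leX : X -> X -> Prop) (lX : X -> ty)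
    (leY : Y -> Y -> Prop) (lY : Y -> ty) (E : X -> Y -> Prop) : Prop :=
  (forall x y x', E x y -> leX x x' -> exists y', leY y y' /\ E x' y') /\
  (forall x y, E x y -> subT (lX x) (lY y)).

Definition simulates (X Y : Type) (leX : X -> X -> Prop) (lX : X -> ty)
    (leY : Y -> Y -> Prop) (lY : Y -> ty) (x : X) (y : Y) : Prop :=
  exists E, is_simulation leX lX leY lY E /\ E x y.

Definition dynamic (X Y : Type) (SX : X -> X -> Prop) (SY : Y -> Y -> Prop)
    (E : X -> Y -> Prop) : Prop :=
  forall x y y', E x y -> SY y y' -> exists x', SX x x' /\ E x' y'.

Definition surjective_rel (X Y : Type) (E : X -> Y -> Prop) : Prop :=
  forall y, exists x, E x y.

Fixpoint bigAnd (s : seq form) : form :=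
  match s with
  | [::] => Top
  | [:: p] => p
  | p :: s' => And p (bigAnd s')
  end.

Fixpoint bigOr (s : seq form) : form :=
  match s with
  | [::] => Bot
  | [:: p] => p
  | p :: s' => Or p (bigOr s')
  end.

(* Backwards induction on the strict order, implemented with fuel; with fuel
   #|W| the base case is never reached for a partial order (chains have at most
   #|W| elements). *)
Fixpoint simF (Sg : seq form) (W : finType) (le : rel W) (l : W -> ty)
    (n : nat) (w : W) : form :=
  match n with
  | 0 => Bot
  | n'.+1 =>
      Imp (bigAnd [seq p <- Sg | tplus (l w) p])
          (bigOr ([seq p <- Sg | tminus (l w) p] ++
                  map (simF Sg le l n') [seq v <- enum W | (v != w) && le w v]))
  end.

Definition Sim (Sg : seq form) (W : finType) (le : rel W) (l : W -> ty)
    (w : W) : form :=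
  simF Sg le l #|W| w.

Definition possible (Sg : seq form) (W : finType) (le : rel W) (l : W -> ty)
    (w : W) : Prop :=
  ~ prov (Sim Sg le l w).

(* Main.v *)
Require Import Defs.
From HB Require Import structures.
From mathcomp Require Import all_boot.
From Stdlib Require Import Classical ClassicalEpsilon FunctionalExtensionality PropExtensionality ProofIrrelevance.

Module Aux.
Set Implicit Arguments. Unset Strict Implicit.

Lemma pI p : prov (Imp p p).
Proof.
apply: r_mp (ax_K p p).
apply: r_mp (ax_K p (Imp p p)).
exact: ax_S.
Qed.

Lemma pcomp a b c : prov (Imp a b) -> prov (Imp b c) -> prov (Imp a c).
Proof.
move=> Hab Hbc.
have H1 : prov (Imp a (Imp b c)) by apply: r_mp (ax_K _ _) Hbc.
exact: r_mp (r_mp (ax_S a b c) H1) Hab.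
Qed.

Lemma por a b c : prov (Imp a c) -> prov (Imp b c) -> prov (Imp (Or a b) c).
Proof. move=> H1 H2; exact: r_mp (r_mp (ax_orE a b c) H1) H2. Qed.

Lemma pnext a b : prov (Imp a b) -> prov (Imp (Next a) (Next b)).
Proof. move=> H; exact: r_mp (ax_next_K a b) (r_nec H). Qed.

Lemma p_dia_intro p : prov (Imp p (Dia p)).
Proof. exact: pcomp (ax_orI1 _ _) (ax_dia_fix p). Qed.

Lemma p_ndia p : prov (Imp (Next (Dia p)) (Dia p)).
Proof. exact: pcomp (ax_orI2 _ _) (ax_dia_fix p). Qed.

Lemma p_dia_unfold p : prov (Imp (Dia p) (Or p (Next (Dia p)))).
Proof.
set psi := Or p (Next (Dia p)).
have H : prov (Imp (Next psi) psi).
  apply: pcomp (ax_next_or _ _) _.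
  apply: pcomp (ax_orI2 p _).
  apply: por; first exact: pnext (p_dia_intro p).
  exact: pnext (p_ndia p).
exact: pcomp (r_dia_mono (ax_orI1 p (Next (Dia p)))) (r_dia_ind H).
Qed.

Inductive der (G : form -> Prop) : form -> Prop :=
| d_ax p : prov p -> der G p
| d_hyp p : G p -> der G p
| d_mp p q : der G (Imp p q) -> der G p -> der G q.

Lemma der_mono (G G' : form -> Prop) p : (forall x, G x -> G' x) -> der G p -> der G' p.
Proof.
move=> HG; elim=> {p} [p H|p H|p q _ IH1 _ IH2].
- exact: d_ax.
- exact/d_hyp/HG.
- exact: d_mp IH1 IH2.
Qed.

Lemma deduction (G : form -> Prop) a q :
  der (fun x => G x \/ x = a) q -> der G (Imp a q).
Proof.
elim=> {q} [p H|p [H| ->]|p q _ IH1 _ IH2].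
- exact: d_mp (d_ax _ (ax_K p a)) (d_ax _ H).
- exact: d_mp (d_ax _ (ax_K p a)) (d_hyp H).
- exact: d_ax _ (pI a).
- exact: d_mp (d_mp (d_ax _ (ax_S a p q)) IH1) IH2.
Qed.

Lemma der_empty p : der (fun _ => False) p -> prov p.
Proof. elim=> {p} [p H|p []|p q _ IH1 _ IH2]; [exact: H| exact: r_mp IH1 IH2]. Qed.

Definition ptheory (T : form -> Prop) :=
  [/\ (forall p, prov p -> T p), (forall p q, T (Imp p q) -> T p -> T q),
      ~ T Bot & (forall p q, T (Or p q) -> T p \/ T q)].

Lemma pt_der T p : ptheory T -> der T p -> T p.
Proof.
case=> Hth Hmp _ _; elim=> {p} [p H|p H|p q _ IH1 _ IH2].
- exact: Hth. - exact: H. - exact: Hmp IH1 IH2.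
Qed.

Fixpoint enc (f : form) : GenTree.tree nat :=
  match f with
  | Var n => GenTree.Leaf n
  | Bot => GenTree.Node 0 [::]
  | And a b => GenTree.Node 1 [:: enc a; enc b]
  | Or a b => GenTree.Node 2 [:: enc a; enc b]
  | Imp a b => GenTree.Node 3 [:: enc a; enc b]
  | Next a => GenTree.Node 4 [:: enc a]
  | Dia a => GenTree.Node 5 [:: enc a]
  end.

Fixpoint dec (t : GenTree.tree nat) : option form :=
  match t with
  | GenTree.Leaf n => Some (Var n)
  | GenTree.Node 0 [::] => Some Bot
  | GenTree.Node 1 [:: a; b] =>
      match dec a, dec b with Some x, Some y => Some (And x y) | _, _ => None end
  | GenTree.Node 2 [:: a; b] =>
      match dec a, dec b with Some x, Some y => Some (Or x y) | _, _ => None end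
  | GenTree.Node 3 [:: a; b] =>
      match dec a, dec b with Some x, Some y => Some (Imp x y) | _, _ => None end
  | GenTree.Node 4 [:: a] =>
      match dec a with Some x => Some (Next x) | _ => None end
  | GenTree.Node 5 [:: a] =>
      match dec a with Some x => Some (Dia x) | _ => None end
  | _ => None
  end.

Lemma encK : pcancel enc dec.
Proof. by elim=> //= [a -> b ->|a -> b ->|a -> b ->|a ->|a ->]. Qed.

Definition enumf (n : nat) : form :=
  match unpickle n with Some t => odflt Bot (dec t) | None => Bot end.

Lemma enumf_surj f : exists n, enumf n = f.
Proof. by exists (pickle (enc f)); rewrite /enumf pickleK /= encK. Qed.

Section Lind.
End Lind.

Fixpoint chain (G : form -> Prop) (q : form) (n : nat) : form -> Prop :=
  match n with
  | 0 => G
  | n'.+1 => fun x => chain G q n' x \/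
        (x = enumf n' /\ ~ der (fun y => chain G q n' y \/ y = enumf n') q)
  end.

Lemma chain_mono G q n m x : n <= m -> chain G q n x -> chain G q m x.
Proof.
move=> /subnK <-; elim: (m - n) => [|k IH] //= H; left; exact: IH.
Qed.

Lemma chain_cons G q n : ~ der G q -> ~ der (chain G q n) q.
Proof.
move=> H0; elim: n => [|n IH] //=.
case: (classic (der (fun y => chain G q n y \/ y = enumf n) q)) => Hc.
- apply: contra_not IH; apply: der_mono => x [//|[_ ?]]; by [].
- apply: contra_not Hc; apply: der_mono => x [?|[? _]]; by [left|right].
Qed.

Definition limit G q := fun x => exists n, chain G q n x.

Lemma limit_der G q p : der (limit G q) p -> exists n, der (chain G q n) p.
Proof.
elim=> {p} [p H|p [n H]|p r _ [n1 IH1] _ [n2 IH2]].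
- by exists 0; apply: d_ax.
- by exists n; apply: d_hyp.
- exists (maxn n1 n2); apply: d_mp.
  + apply: der_mono IH1 => x; apply: chain_mono; exact: leq_maxl.
  + apply: der_mono IH2 => x; apply: chain_mono; exact: leq_maxr.
Qed.

Lemma lindenbaum G q : ~ der G q ->
  exists T, ptheory T /\ (forall x, G x -> T x) /\ ~ T q.
Proof.
move=> H0.
have Hcons : ~ der (limit G q) q.
  by move=> /limit_der [n Hn]; exact: (chain_cons H0 Hn).
have Hout : forall x, ~ limit G q x -> der (limit G q) (Imp x q).
  move=> x Hx; have [n Hn] := enumf_surj x.
  case: (classic (der (fun y => chain G q n y \/ y = enumf n) q)) => Hc.
  - rewrite -Hn; apply: deduction; apply: der_mono Hc => y [Hy|->]; last by right.
    by left; exists n.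
  - by case: Hx; exists n.+1; right; split.
have Hclosed : forall p, der (limit G q) p -> limit G q p.
  move=> p Hp; apply: NNPP => Hn; apply: Hcons; exact: d_mp (Hout _ Hn) Hp.
exists (limit G q); split; [split|split].
- by move=> p Hp; apply: Hclosed; apply: d_ax.
- move=> p r H1 H2; apply: Hclosed; exact: d_mp (d_hyp H1) (d_hyp H2).
- by move=> Hb; apply: Hcons; exact: d_mp (d_ax _ (ax_efq q)) (d_hyp Hb).
- move=> p r Hpr; apply: NNPP => Hn.
  have Hp : ~ limit G q p by move=> ?; apply: Hn; left.
  have Hr : ~ limit G q r by move=> ?; apply: Hn; right.
  apply: Hcons; apply: d_mp (d_hyp Hpr).
  exact: d_mp (d_mp (d_ax _ (ax_orE p r q)) (Hout _ Hp)) (Hout _ Hr).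
- by move=> x Hx; exists 0.
- by move=> Hq; apply: Hcons; apply: d_hyp.
Qed.

Definition bP (P : Prop) : bool := if excluded_middle_informative P then true else false.
Lemma bPP P : reflect P (bP P).
Proof. rewrite /bP; case: excluded_middle_informative => H; by constructor. Qed.

Section PT.
Lemma pt_and T p q : ptheory T -> (T (And p q) <-> T p /\ T q).
Proof.
move=> [Hth Hmp _ _]; split.
- move=> H; split; [exact: Hmp _ _ (Hth _ (ax_andE1 p q)) H|exact: Hmp _ _ (Hth _ (ax_andE2 p q)) H].
- case=> H1 H2; exact: Hmp _ _ (Hmp _ _ (Hth _ (ax_andI p q)) H1) H2.
Qed.

Lemma pt_or T p q : ptheory T -> (T (Or p q) <-> T p \/ T q).
Proof.
move=> [Hth Hmp _ Hor]; split; first exact: Hor.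
case=> H; [exact: Hmp _ _ (Hth _ (ax_orI1 p q)) H|exact: Hmp _ _ (Hth _ (ax_orI2 p q)) H].
Qed.

Lemma pt_imp T p q : ptheory T -> ~ T (Imp p q) ->
  exists D, ptheory D /\ (forall x, T x -> D x) /\ D p /\ ~ D q.
Proof.
move=> HT Hn.
have H : ~ der (fun x => T x \/ x = p) q.
  move=> /deduction Hd; apply: Hn; exact: pt_der HT Hd.
have [D [HD [HsD Hq]]] := lindenbaum H.
exists D; split=> //; split; first by move=> x Hx; apply: HsD; left.
split=> //; apply: HsD; by right.
Qed.

Lemma pt_Top T : ptheory T -> T Top.
Proof. case=> Hth _ _ _; apply: Hth; exact: pI. Qed.

Lemma pt_bigAnd T s : ptheory T -> (T (bigAnd s) <-> forall p, p \in s -> T p).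
Proof.
move=> HT; elim: s => [|p s IH]; first by split=> // _; exact: pt_Top.
case: s IH => [|r s] IH.
- by split=> [H x|H]; [rewrite inE => /eqP ->|apply: H; rewrite inE].
- rewrite /= -/(bigAnd (r :: s)) pt_and // IH; split.
  + by case=> H1 H2 x; rewrite inE => /orP [/eqP ->|]; [|apply: H2].
  + move=> H; split; first by apply: H; rewrite inE eqxx.
    by move=> x Hx; apply: H; rewrite inE Hx orbT.
Qed.

Lemma pt_bigOr T s : ptheory T -> (T (bigOr s) <-> exists2 p, p \in s & T p).
Proof.
move=> HT; elim: s => [|p s IH]; first by split=> [|[]//]; case: HT.
case: s IH => [|r s] IH.
- by split=> [H|[x]]; [exists p; rewrite ?inE|rewrite inE => /eqP ->].
- rewrite /= -/(bigOr (r :: s)) pt_or // IH; split.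
  + case=> [H|[x Hx H]]; first by exists p; rewrite ?inE ?eqxx.
    by exists x; rewrite // inE Hx orbT.
  + case=> x; rewrite inE => /orP [/eqP ->|Hx] H; [by left|right; by exists x].
Qed.

Lemma pt_next T : ptheory T -> ptheory (fun p => T (Next p)).
Proof.
move=> HT; have [Hth Hmp Hbot Hor] := HT; split.
- move=> p Hp; apply: Hth; exact: r_nec.
- move=> p q H1 H2; exact: Hmp _ _ (Hmp _ _ (Hth _ (ax_next_K p q)) H1) H2.
- move=> H; apply: Hbot; exact: Hmp _ _ (Hth _ ax_next_bot) H.
- move=> p q H; exact: Hor _ _ (Hmp _ _ (Hth _ (ax_next_or p q)) H).
Qed.
End PT.

Definition CT := {T : form -> Prop | ptheory T}.

Lemma ct_ext (G D : CT) : (forall p, sval G p <-> sval D p) -> G = D.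
Proof.
case: G D => [T1 h1] [T2 h2] /= H.
have E : T1 = T2 by apply: functional_extensionality => p; apply: propositional_extensionality.
subst; f_equal; apply: proof_irrelevance.
Qed.

Definition leA (G D : CT) : Prop := forall p, sval G p -> sval D p.
Definition SA (G D : CT) : Prop := forall p, sval D p <-> sval G (Next p).
Definition lA (G : CT) : ty := Ty (fun p => ~~ bP (sval G p)) (fun p => bP (sval G p)).
Definition succA (G : CT) : CT := exist _ _ (pt_next (proj2_sig G)).

Lemma SA_succ G : SA G (succA G).
Proof. by []. Qed.

Lemma det_SA : deterministic SA.
Proof.
move=> G; exists (succA G); split; first exact: SA_succ.
move=> D HD; apply: ct_ext => p; rewrite HD; by [].
Qed.

Lemma lA_minus G p : tminus (lA G) p <-> ~ sval G p.
Proof. by rewrite /=; split=> [/bPP|H]; last apply/bPP. Qed.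
Lemma lA_plus G p : tplus (lA G) p <-> sval G p.
Proof. by rewrite /=; split=> [/bPP|/bPP]. Qed.

Lemma qm_A : is_weak_qm (fun _ => true) leA SA lA.
Proof.
split; [split; [|split; [|split; [|split; [|split]]]]|split].
- by move=> G p.
- by move=> G1 G2 G3 H1 H2 p /H1 /H2.
- move=> G D H1 H2; apply: ct_ext => p; split; [exact: H1|exact: H2].
- move=> [T HT]; split; [|split; [|split; [|split; [|split; [|split]]]]] => /=.
  + by move=> p; case: bP.
  + by move=> p; case: bP.
  + by apply/bPP; case: HT.
  + move=> p q _; apply/bPP/andP => [/(pt_and _ _ HT) [/bPP ? /bPP ?]//|[/bPP ? /bPP ?]].
    by apply/(pt_and _ _ HT).
  + move=> p q _; apply/bPP/orP => [/(pt_or _ _ HT) [/bPP ?|/bPP ?]|[/bPP ?|/bPP ?]];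
      by [left|right|apply/(pt_or _ _ HT); left|apply/(pt_or _ _ HT); right].
  + move=> p q /bPP H; case: (bPP (T p)) => Hp //=; apply/bPP.
    by case: HT => _ Hmp _ _; apply: Hmp _ _ H Hp.
  + move=> p /negP Hn; apply/negP => /bPP Hp; apply: Hn; apply/bPP.
    by case: HT => Hth Hmp _ _; apply: Hmp _ _ (Hth _ (p_dia_intro p)) Hp.
- by move=> G D p Hle /lA_plus H; apply/lA_plus; apply: Hle.
- move=> [T HT] p q /lA_minus /= Hn.
  have [D [HD [Hs [Hp Hq]]]] := pt_imp HT Hn.
  exists (exist _ D HD); split=> //; split; [exact/lA_plus|exact/lA_minus].
- move=> G G' V Hle HS; exists (succA G'); split; last exact: SA_succ.
  by move=> p /HS /Hle.
- move=> [T HT] [V HV] HS; split; [|split; [|split]].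
  + by move=> p /lA_plus H; apply/lA_plus; apply/HS.
  + by move=> p /lA_minus H; apply/lA_minus => /HS.
  + move=> p /lA_plus H1 /lA_minus H2; apply/lA_plus; apply/HS.
    have [Hth Hmp _ _] := HT.
    have := Hmp _ _ (Hth _ (p_dia_unfold p)) H1.
    by move/(pt_or _ _ HT) => [].
  + move=> p /lA_minus H; apply/lA_minus => /HS H'; apply: H.
    have [Hth Hmp _ _] := HT; exact: Hmp _ _ (Hth _ (p_ndia p)) H'.
Qed.

Section WSide.
Variables (Sg : seq form) (W : finType) (leI : rel W) (lI : W -> ty).
Hypothesis Hrefl : forall w, leI w w.
Hypothesis Htrans : forall u v w, leI u v -> leI v w -> leI u w.
Hypothesis Hanti : forall u v, leI u v -> leI v u -> u = v.
Hypothesis Htype : forall w, is_type (fun p => p \in Sg) (lI w).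

Definition cnt (x : W) := #|[pred u | (u != x) && leI x u]|.

Lemma cnt_lt x v : leI x v -> v != x -> cnt v < cnt x.
Proof.
move=> Hxv Hvx; apply: proper_card; apply/properP; split.
- apply/subsetP => u; rewrite !inE => /andP [Huv Hvu]; rewrite (Htrans Hxv Hvu) andbT.
  apply/eqP => Eux; subst u; by rewrite (Hanti Hxv Hvu) eqxx in Huv.
- by exists v; rewrite !inE ?Hvx ?Hxv ?eqxx.
Qed.

Lemma cnt_N x : cnt x < #|W|.
Proof.
apply: proper_card; apply/properP; split; first exact/subsetP.
by exists x; rewrite !inE ?eqxx.
Qed.

Notation simF := (simF Sg leI lI).
Notation Sim := (Sim Sg leI lI).

Lemma tplus_Sg w p : tplus (lI w) p -> p \in Sg.
Proof. by have [_ [H _]] := Htype w; rewrite H => ->; rewrite orbT. Qed.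
Lemma tminus_Sg w p : tminus (lI w) p -> p \in Sg.
Proof. by have [_ [H _]] := Htype w; rewrite H => ->. Qed.

Lemma simF_mem n (x : W) T : ptheory T ->
  (T (simF n.+1 x) <-> forall D, ptheory D -> (forall q, T q -> D q) ->
     (forall p, tplus (lI x) p -> D p) ->
     (exists2 p, tminus (lI x) p & D p) \/
     (exists v, [/\ v != x, leI x v & D (simF n v)])).
Proof.
move=> HT; rewrite /=; split.
- move=> H D HD Hs Hp.
  have [_ Hmp _ _] := HD.
  have Ha : D (bigAnd [seq p <- Sg | tplus (lI x) p]).
    by apply/(pt_bigAnd _ HD) => p; rewrite mem_filter => /andP [/Hp].
  have := Hmp _ _ (Hs _ H) Ha; move/(pt_bigOr _ HD) => [e]; rewrite mem_cat => /orP [].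
  + by rewrite mem_filter => /andP [He _] De; left; exists e.
  + case/mapP => v; rewrite mem_filter mem_enum andbT => /andP [Hvx Hxv] -> De.
    by right; exists v.
- move=> H; apply: NNPP => Hn.
  have [D [HD [Hs [Ha Hb]]]] := pt_imp HT Hn.
  have Hp : forall p, tplus (lI x) p -> D p.
    move=> p Hp; move/(pt_bigAnd _ HD): Ha; apply; rewrite mem_filter Hp.
    exact: tplus_Sg Hp.
  apply: Hb; apply/(pt_bigOr _ HD).
  case: (H D HD Hs Hp) => [[p Hm Dp]|[v [Hvx Hxv Dv]]].
  + exists p => //; rewrite mem_cat mem_filter Hm (tminus_Sg Hm) //.
  + exists (simF n v) => //; rewrite mem_cat; apply/orP; right.
    by apply: map_f; rewrite mem_filter mem_enum Hvx Hxv.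
Qed.

Lemma fuel k (x : W) m m' T : cnt x < k -> cnt x < m -> cnt x < m' -> ptheory T ->
  T (simF m x) -> T (simF m' x).
Proof.
elim: k x m m' T => [//|k IH] x [//|m] [//|m'] T Hk Hm Hm' HT.
rewrite !simF_mem // => H D HD Hs Hp.
case: (H D HD Hs Hp) => [L|[v [Hvx Hxv Dv]]]; first by left.
right; exists v; split=> //.
have Hc := cnt_lt Hxv Hvx.
apply: (IH v m m' D) => //; apply: leq_trans Hc _; by rewrite -ltnS.
Qed.

Lemma cardW_S (x : W) : #|W| = (#|W|.-1).+1.
Proof. by rewrite prednK //; apply: leq_ltn_trans (cnt_N x). Qed.

Definition Q x (T : form -> Prop) :=
  [/\ (forall p, tplus (lI x) p -> T p), (forall p, tminus (lI x) p -> ~ T p) &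
      (forall u, u != x -> leI x u -> ~ T (Sim u))].

Lemma fuel_Sim n (v : W) T : cnt v < n -> ptheory T -> T (simF n v) <-> T (Sim v).
Proof.
move=> Hn HT; split; apply: fuel (cnt_N v) _ _ HT => //; exact: cnt_N.
Qed.

Lemma L1 (x : W) T : ptheory T -> Q x T -> ~ T (Sim x).
Proof.
move=> HT [Hp Hm Hu]; rewrite /Sim (cardW_S x) simF_mem //.
move=> /(_ T HT (fun q H => H) Hp) [[p /Hm]//|[v [Hvx Hxv Dv]]].
have Hc : cnt v < #|W|.-1.
  have := cnt_lt Hxv Hvx; have := cnt_N x; rewrite (cardW_S x) ltnS.
  move=> H1 H2; exact: leq_trans H2 H1.
apply: (Hu v Hvx Hxv); exact/(fuel_Sim Hc HT).
Qed.

Lemma L2 (x : W) T : ptheory T -> ~ T (Sim x) ->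
  exists D, [/\ ptheory D, (forall q, T q -> D q) & Q x D].
Proof.
move=> HT; rewrite /Sim (cardW_S x) simF_mem // => Hn.
apply: NNPP => Hne; apply: Hn => D HD Hs Hp.
apply: NNPP => Hdis; apply: Hne; exists D; split=> //; split=> //.
- by move=> p Hm Dp; apply: Hdis; left; exists p.
- move=> u Hux Hxu Du; apply: Hdis; right; exists u; split=> //.
  have Hc : cnt u < #|W|.-1.
    have := cnt_lt Hxu Hux; have := cnt_N x; rewrite (cardW_S x) ltnS.
    move=> H1 H2; exact: leq_trans H2 H1.
  exact/(fuel_Sim Hc HD).
Qed.

Lemma L3 (E : W -> CT -> Prop) :
  is_simulation (fun x y => leI x y) lI leA lA E ->
  forall x G, E x G -> Q x (sval G).
Proof.
move=> [Hfc Hsub] x.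
have [k Hk] : exists k, cnt x < k by exists (cnt x).+1.
elim: k x Hk => [//|k IH] x Hk G HE.
have [Hs1 Hs2] := Hsub _ _ HE; split.
- by move=> p /Hs2 /lA_plus.
- by move=> p /Hs1 /lA_minus.
- move=> u Hux Hxu Gu.
  have [G' [HGG' HE']] := Hfc _ _ _ HE Hxu.
  have Hc : cnt u < k by apply: leq_trans (cnt_lt Hxu Hux) _; rewrite -ltnS.
  have HQ := IH u Hc G' HE'.
  by apply: (L1 (proj2_sig G') HQ); apply: HGG'.
Qed.

End WSide.

End Aux.
Import Aux.

Theorem lemma6p3 (Sg : seq form) (W : finType) (leI : rel W)
    (SI : W -> W -> Prop) (lI : W -> ty) :
  subf_closed Sg ->
  is_weak_qm (fun p => p \in Sg) (fun x y => leI x y) SI lI ->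
  (forall (A : Type) (leA SA : A -> A -> Prop) (lA : A -> ty),
     is_weak_qm (fun _ => true) leA SA lA ->
     deterministic SA ->
     is_simulation (fun x y => leI x y) lI leA lA
       (simulates (fun x y => leI x y) lI leA lA) /\
     dynamic SI SA (simulates (fun x y => leI x y) lI leA lA) /\
     surjective_rel (simulates (fun x y => leI x y) lI leA lA)) ->
  (forall w v, possible Sg leI lI w -> leI w v -> possible Sg leI lI v) /\
  (forall w, possible Sg leI lI w -> exists v, possible Sg leI lI v /\ SI w v).
Proof.
move=> _ [[Hrefl [Htrans [Hanti [Htype _]]]] _] Hyp.
have notprov : forall (T : form -> Prop) p, ptheory T -> ~ T p -> ~ prov p.
  by move=> T p [Hth _ _ _] Hn Hp; apply: Hn; apply: Hth.
have key : forall w, possible Sg leI lI w ->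
    exists D, ptheory D /\ Q Sg leI lI w D.
  move=> w Hw.
  have H0 : ~ der (fun _ => False) (Sim Sg leI lI w) by move/der_empty.
  have [T [HT [_ HnT]]] := lindenbaum H0.
  have [D [HD _ HQ]] := L2 Htrans Hanti Htype HT HnT.
  by exists D.
split.
- move=> w v Hw Hwv; have [D [HD [_ _ Hu]]] := key w Hw.
  case: (eqVneq v w) => [->//|Hvw].
  exact: notprov HD (Hu v Hvw Hwv).
- move=> w Hw; have [D [HD HQ]] := key w Hw.
  pose G : CT := exist _ D HD.
  have Hsim : simulates (fun x y => leI x y) lI leA lA w G.
    exists (fun x (G : CT) => Q Sg leI lI x (sval G)); split=> //; split.
    + move=> x G' x' [Hp Hm Hu] Hxx'.
      case: (eqVneq x' x) => [->|Hx'x]; first by exists G'; split=> //; split.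
      have [D' [HD' Hs HQ']] := L2 Htrans Hanti Htype (proj2_sig G') (Hu x' Hx'x Hxx').
      by exists (exist _ D' HD').
    + move=> x G' [Hp Hm _]; split=> p H.
      * by apply/lA_minus; apply: Hm.
      * by apply/lA_plus; apply: Hp.
  have [_ [Hdyn _]] := Hyp CT leA SA lA qm_A det_SA.
  have [v [HSv [E [HE HEv]]]] := Hdyn w G (succA G) Hsim (SA_succ G).
  exists v; split=> //.
  have HQv := L3 Htrans Hanti Htype HE HEv.
  exact: notprov (proj2_sig (succA G)) (L1 Htrans Hanti Htype (proj2_sig (succA G)) HQv).
Qed.
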